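(* Let $k\ge 0$ be an integer and let $\sigma$ be a maximal simplex of $\mathrm{VR}(\mathbb{Z}^2;k)$. Then there is a point $c\in\mathbb{R}^2$, each of whose coordinates is an integer or a half-integer, such that $\sigma=B_{\mathbb{R}^2}[c,\tfrac{k}{2}]\cap\mathbb{Z}^2$.
   Context: $\mathbb{Z}^2$ and $\mathbb{R}^2$ carry the $l^1$ metric $d((x,y),(x',y'))=|x-x'|+|y-y'|$, and $B_{\mathbb{R}^2}[c,r]=\{p\in\mathbb{R}^2: d(p,c)\le r\}$. $\mathrm{VR}(X;r)$ is the simplicial complex on vertex set $X$ whose simplices are the finite nonempty subsets of diameter at most $r$; a maximal simplex is one not properly contained in another simplex. A half-integer is a number of the form $m+\tfrac12$ with $m\in\mathbb{Z}$. *)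

(* Defs.v *)
From Stdlib Require Export ZArith Reals List.

Definition zpt := (Z * Z)%type.

Definition zdist (p q : zpt) : Z :=
  (Z.abs (fst p - fst q) + Z.abs (snd p - snd q))%Z.

Definition rdist (p q : R * R) : R :=
  (Rabs (fst p - fst q) + Rabs (snd p - snd q))%R.

Definition zpt_to_R (p : zpt) : R * R := (IZR (fst p), IZR (snd p)).

Definition closed_ballR (c : R * R) (r : R) (p : R * R) : Prop := (rdist p c <= r)%R.

Definition finite_set (S : zpt -> Prop) : Prop :=
  exists l : list zpt, forall x, S x <-> In x l.

Definition VR_simplex (r : R) (S : zpt -> Prop) : Prop :=
  finite_set S /\ (exists x, S x) /\
  forall p q, S p -> S q -> (IZR (zdist p q) <= r)%R.

Definition VR_maximal_simplex (r : R) (S : zpt -> Prop) : Prop :=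
  VR_simplex r S /\
  forall T, VR_simplex r T -> (forall x, S x -> T x) -> (forall x, T x -> S x).

Definition int_or_half_int (x : R) : Prop := exists m : Z, x = (IZR m / 2)%R.

(* Main.v *)
Require Import Defs.
From Stdlib Require Import ZArith Reals List Lia Lra Bool.
Open Scope bool_scope.

Lemma list_min (f : zpt -> Z) (l : list zpt) x :
  In x l -> exists m, In m l /\ forall y, In y l -> (f m <= f y)%Z.
Proof.
  revert x; induction l as [|h t IH]; intros x Hx; [destruct Hx|].
  destruct t as [|h2 t'].
  - exists h; split; [left; reflexivity|]. intros y [<-|[]]; lia.
  - destruct (IH h2 (or_introl eq_refl)) as [m [Hm Hmin]].
    destruct (Z.le_gt_cases (f h) (f m)).
    + exists h; split; [left; reflexivity|]. intros y [<-|Hy]; [lia|].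
      specialize (Hmin y Hy); lia.
    + exists m; split; [right; exact Hm|]. intros y [<-|Hy]; [lia|auto].
Qed.

Definition rng (lo : Z) (n : nat) : list Z :=
  map (fun i => (lo + Z.of_nat i)%Z) (seq 0 n).

Lemma in_rng lo n z : (lo <= z < lo + Z.of_nat n)%Z -> In z (rng lo n).
Proof.
  intros H. unfold rng. apply in_map_iff. exists (Z.to_nat (z - lo)).
  split; [lia|]. apply in_seq. lia.
Qed.

Lemma half_abs (x m : Z) :
  (Rabs (IZR x - IZR m / 2) = IZR (Z.abs (2 * x - m)) / 2)%R.
Proof.
  replace (IZR x - IZR m / 2)%R with (IZR (2 * x - m) / 2)%R.
  2:{ rewrite minus_IZR, mult_IZR. field. }
  rewrite abs_IZR. unfold Rdiv. rewrite Rabs_mult. rewrite (Rabs_right (/2)); [reflexivity|].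
  apply Rle_ge; left; apply Rinv_0_lt_compat; lra.
Qed.

Theorem lemma4p1 (k : nat) (sigma : zpt -> Prop) :
  VR_maximal_simplex (INR k) sigma ->
  exists c : R * R,
    int_or_half_int (fst c) /\ int_or_half_int (snd c) /\
    (forall p : zpt, sigma p <-> closed_ballR c (INR k / 2) (zpt_to_R p)).
Proof.
  intros [[[l Hl] [[x0 Hx0] Hdiam]] Hmax].
  set (K := Z.of_nat k).
  assert (Hd : forall p q, sigma p -> sigma q -> (zdist p q <= K)%Z).
  { intros p q Hp Hq. apply le_IZR. unfold K. rewrite <- INR_IZR_INZ. auto. }
  set (fu := fun p : zpt => (fst p + snd p)%Z).
  set (fv := fun p : zpt => (fst p - snd p)%Z).
  destruct (list_min fu l x0 (proj1 (Hl x0) Hx0)) as [pa [Hpa Ha]].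
  destruct (list_min fv l x0 (proj1 (Hl x0) Hx0)) as [pc [Hpc Hc]].
  set (a := fu pa). set (c := fv pc).
  set (B := fun p : zpt => ((a <=? fu p) && (fu p <=? a + K) &&
                            (c <=? fv p) && (fv p <=? c + K))%Z = true).
  assert (HB : forall p, B p <-> (a <= fu p <= a + K /\ c <= fv p <= c + K)%Z).
  { intros p; unfold B. rewrite !Bool.andb_true_iff, !Z.leb_le. tauto. }
  assert (Hsub : forall p, sigma p -> B p).
  { intros p Hp. apply HB. apply Hl in Hpa as Hpa', Hpc as Hpc'.
    pose proof (Ha p (proj1 (Hl p) Hp)). pose proof (Hc p (proj1 (Hl p) Hp)).
    pose proof (Hd p pa Hp (proj2 (Hl pa) Hpa)).
    pose proof (Hd p pc Hp (proj2 (Hl pc) Hpc)).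
    unfold zdist, a, c, fu, fv in *. lia. }
  assert (HBs : VR_simplex (INR k) B).
  { split; [|split].
    - set (box := list_prod (rng (fst x0 - K) (2 * k + 1)) (rng (snd x0 - K) (2 * k + 1))).
      exists (filter (fun p => ((a <=? fu p) && (fu p <=? a + K) &&
                            (c <=? fv p) && (fv p <=? c + K))%Z) box).
      intros p. rewrite filter_In. split.
      + intros Hp. split; [|exact Hp].
        pose proof (proj1 (HB p) Hp) as Hp'. pose proof (Hsub x0 Hx0) as H0.
        apply HB in H0. destruct p as [px py].
        apply in_prod; apply in_rng; unfold fu, fv, K in *; simpl in *; lia.
      + intros [_ H]; exact H.
    - exists x0; auto.
    - intros p q Hp Hq. rewrite INR_IZR_INZ. apply IZR_le.
      apply HB in Hp; apply HB in Hq. unfold zdist, fu, fv, K in *. lia. }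
  assert (Hiff : forall p, sigma p <-> B p).
  { intros p; split; [apply Hsub|]. apply (Hmax B HBs Hsub). }
  exists (IZR (a + c + K) / 2, IZR (a - c) / 2)%R.
  split; [eexists; reflexivity|]. split; [eexists; reflexivity|].
  intros p. rewrite Hiff, HB. unfold closed_ballR, rdist, zpt_to_R. simpl.
  rewrite !half_abs. rewrite INR_IZR_INZ. fold K.
  split.
  - intros H.
    assert (Z.abs (2 * fst p - (a + c + K)) + Z.abs (2 * snd p - (a - c)) <= K)%Z
      by (unfold fu, fv in *; lia).
    apply IZR_le in H0. rewrite plus_IZR in H0. lra.
  - intros H.
    assert (Z.abs (2 * fst p - (a + c + K)) + Z.abs (2 * snd p - (a - c)) <= K)%Z.
    { apply le_IZR. rewrite plus_IZR. lra. }
    unfold fu, fv in *; lia.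
Qed.
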